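(* Let $\alpha\geq 0$ and $r_\alpha(x)=\|x\|_1-\alpha\|x\|_2$ on $\mathbb{R}^N$. Let $l:\mathbb{R}^N\to\mathbb{R}$ be differentiable with $\|\nabla l(x)-\nabla l(y)\|_2\leq L\|x-y\|_2$ for all $x,y$, for some $L>0$. Define $E(x)=r_\alpha(x)+l(x)$ and assume that $E$ is coercive, i.e., $E(x)\to+\infty$ as $\|x\|_2\to+\infty$. Let $0<\lambda<1/L$, let $x^0\in\mathbb{R}^N$, and let $(x^k)$ be generated by the forward-backward splitting iteration $$x^{k+1}\in\operatorname{argmin}_{x}\ \Big(r_\alpha(x)+\frac{1}{2\lambda}\big\|x-(x^k-\lambda\nabla l(x^k))\big\|_2^2\Big).$$ Then the sequence of objective values $E(x^k)$ is decreasing, there exists a subsequence of $(x^k)$ that converges to a stationary point of $E$, and every limit point of $(x^k)$ is a stationary point of $E$.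
   Context: A stationary point of $E$ is a point $x$ satisfying the first-order optimality condition $0\in\partial r_\alpha(x)+\nabla l(x)$, where $\partial$ denotes the (limiting) subdifferential. *)

(* Defs.v *)
From HB Require Import structures.
From mathcomp Require Import all_boot all_order all_algebra.
From mathcomp Require Import all_classical all_reals all_analysis.
Set Implicit Arguments. Unset Strict Implicit. Unset Printing Implicit Defensive.
Import Order.TTheory GRing.Theory Num.Theory.
Import numFieldNormedType.Exports.
Local Open Scope classical_set_scope.
Local Open Scope ring_scope.

Section Defs.
Variables (R : realType) (N : nat).
Notation V := 'rV[R]_N.

Definition dotp (x y : V) : R := \sum_(i < N) x ord0 i * y ord0 i.
Definition norm1 (x : V) : R := \sum_(i < N) `|x ord0 i|.
Definition norm2 (x : V) : R := Num.sqrt (\sum_(i < N) (x ord0 i) ^+ 2).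

Definition r_alpha (alpha : R) (x : V) : R := norm1 x - alpha * norm2 x.

Definition grad (f : V -> R) (x : V) : V :=
  \row_(i < N) ('d f x (delta_mx ord0 i : V)).

(* Frechet (regular) subdifferential:
   v \in \hat\partial f(x) iff liminf_{y -> x, y <> x}
   (f y - f x - <v, y - x>) / ||y - x|| >= 0. *)
Definition frechet_subdiff (f : V -> R) (x : V) : set V :=
  [set v | forall eps : R, 0 < eps ->
     \forall y \near x,
        f y - f x - dotp v (y - x) >= - (eps * norm2 (y - x))].

Definition limiting_subdiff (f : V -> R) (x : V) : set V :=
  [set v | exists (xs vs : nat -> V),
     [/\ xs @ \oo --> x, (f \o xs) @ \oo --> f x,
         (forall k, vs k \in frechet_subdiff f (xs k)) & vs @ \oo --> v]].

Definition stationary (alpha : R) (l : V -> R) (x : V) : Prop :=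
  exists v, v \in limiting_subdiff (r_alpha alpha) x /\ v + grad l x = 0.

End Defs.

(* Main.v *)
Require Import Defs.
From HB Require Import structures.
From mathcomp Require Import all_boot all_order all_algebra.
From mathcomp Require Import all_classical all_reals all_analysis.
From mathcomp Require Import ring lra.
Import Order.TTheory GRing.Theory Num.Theory.
Import numFieldNormedType.Exports.
Local Open Scope classical_set_scope.
Local Open Scope ring_scope.

Section Basic.
Variables (R : realType) (N : nat).
Notation V := 'rV[R]_N.
Implicit Types (x y z a b : V).

Lemma dotpC x y : dotp x y = dotp y x.
Proof. by rewrite /dotp; apply: eq_bigr => i _; rewrite mulrC. Qed.

Lemma dotpDl x y z : dotp (x + y) z = dotp x z + dotp y z.
Proof. by rewrite /dotp -big_split; apply: eq_bigr => i _; rewrite !mxE mulrDl. Qed.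

Lemma dotpZl (c : R) x y : dotp (c *: x) y = c * dotp x y.
Proof. by rewrite /dotp mulr_sumr; apply: eq_bigr => i _; rewrite !mxE mulrA. Qed.

Lemma dotpNl x y : dotp (- x) y = - dotp x y.
Proof. by rewrite -scaleN1r dotpZl mulN1r. Qed.

Lemma dotpBl x y z : dotp (x - y) z = dotp x z - dotp y z.
Proof. by rewrite dotpDl dotpNl. Qed.

Lemma dotpDr x y z : dotp x (y + z) = dotp x y + dotp x z.
Proof. by rewrite dotpC dotpDl !(dotpC x). Qed.
Lemma dotpZr (c : R) x y : dotp x (c *: y) = c * dotp x y.
Proof. by rewrite dotpC dotpZl dotpC. Qed.
Lemma dotpNr x y : dotp x (- y) = - dotp x y.
Proof. by rewrite dotpC dotpNl dotpC. Qed.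
Lemma dotpBr x y z : dotp x (y - z) = dotp x y - dotp x z.
Proof. by rewrite dotpDr dotpNr. Qed.

Lemma dotp0l y : dotp 0 y = 0.
Proof. by rewrite /dotp big1 // => i _; rewrite mxE mul0r. Qed.

Lemma dotpp_ge0 x : 0 <= dotp x x.
Proof. by rewrite /dotp sumr_ge0 // => i _; rewrite -expr2 sqr_ge0. Qed.

Lemma norm2_ge0 x : 0 <= norm2 x.
Proof. exact: sqrtr_ge0. Qed.

Lemma norm2_sq x : norm2 x ^+ 2 = dotp x x.
Proof.
rewrite /norm2 sqr_sqrtr; last by rewrite sumr_ge0 // => i _; rewrite sqr_ge0.
by rewrite /dotp; apply: eq_bigr => i _; rewrite expr2.
Qed.

Lemma norm2E x : norm2 x = Num.sqrt (dotp x x).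
Proof. by rewrite -norm2_sq sqrtr_sqr ger0_norm ?norm2_ge0. Qed.

Lemma norm2_eq0 x : norm2 x = 0 -> x = 0.
Proof.
move=> h; have : dotp x x = 0 by rewrite -norm2_sq h expr0n.
rewrite /dotp => /eqP; rewrite psumr_eq0; last by move=> i _; rewrite -expr2 sqr_ge0.
move=> /allP H; apply/rowP => j; rewrite mxE.
have := H j (mem_index_enum j); rewrite /= -expr2 sqrf_eq0 => /eqP.
by rewrite (ord1 ord0).
Qed.

Lemma norm2N x : norm2 (- x) = norm2 x.
Proof. by rewrite !norm2E dotpNl dotpNr opprK. Qed.

Lemma norm2Z (c : R) x : norm2 (c *: x) = `|c| * norm2 x.
Proof. by rewrite !norm2E dotpZl dotpZr mulrA sqrtrM ?sqr_ge0 // -expr2 sqrtr_sqr. Qed.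

Lemma norm2B x y : norm2 (x - y) = norm2 (y - x).
Proof. by rewrite -norm2N opprB. Qed.

Lemma sq_expand x y : norm2 (x + y) ^+ 2 = norm2 x ^+ 2 + 2 * dotp x y + norm2 y ^+ 2.
Proof. rewrite !norm2_sq dotpDl !dotpDr (dotpC y x); ring. Qed.

Lemma sq_expandB x y : norm2 (x - y) ^+ 2 = norm2 x ^+ 2 - 2 * dotp x y + norm2 y ^+ 2.
Proof. by rewrite sq_expand dotpNr norm2N; ring. Qed.

Lemma CS x y : dotp x y <= norm2 x * norm2 y.
Proof.
set p := norm2 x; set q := norm2 y.
have [p0|pn0] := eqVneq p 0.
  by rewrite (@norm2_eq0 x p0) dotp0l p0 mul0r.
have [q0|qn0] := eqVneq q 0.
  by rewrite (@norm2_eq0 y q0) dotpC dotp0l q0 mulr0.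
have pq : 0 < p * q by rewrite mulr_gt0 // lt0r ?pn0 ?qn0 ?norm2_ge0.
have := sqr_ge0 (norm2 (q *: x - p *: y)).
rewrite sq_expandB !norm2Z dotpZl dotpZr !ger0_norm ?norm2_ge0 // -/p -/q.
move: pq; set d := dotp x y => pq H.
nra.
Qed.
Lemma coord_le_norm2 x i : `|x ord0 i| <= norm2 x.
Proof.
rewrite -sqrtr_sqr /norm2 ler_sqrt; last by rewrite sumr_ge0 // => j _; rewrite sqr_ge0.
by rewrite (bigD1 i) //= lerDl sumr_ge0 // => j _; rewrite sqr_ge0.
Qed.

Lemma coord_le_mx x i : `|x ord0 i| <= `|x|.
Proof.
have /mapP[j Hj ->] : `|x ord0 i| \in [seq `|x k.1 k.2| | k : 'I_1 * 'I_N].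
  by apply/mapP; exists (ord0, i) => //=; rewrite mem_enum.
by rewrite [leRHS]/Num.norm /= mx_normrE; apply/bigmax_geP; right => /=; exists j.
Qed.

Lemma mx_le_norm2 x : `|x| <= norm2 x.
Proof.
rewrite [leLHS]/Num.norm /=.
have [->|/mx_norm_neq0 [[i j] ->]] := eqVneq (mx_norm x) 0; first exact: norm2_ge0.
by rewrite /= (ord1 i) coord_le_norm2.
Qed.

Definition cN : R := Num.sqrt N%:R + 1.
Lemma cN_gt0 : 0 < cN.
Proof. by rewrite /cN ltr_wpDl ?sqrtr_ge0. Qed.

Lemma norm2_le_mx x : norm2 x <= cN * `|x|.
Proof.
apply: (@le_trans _ _ (Num.sqrt N%:R * `|x|)); last first.
  by rewrite ler_wpM2r // /cN lerDl.
have H : \sum_(i < N) (x ord0 i) ^+ 2 <= N%:R * `|x| ^+ 2.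
  rewrite mulr_natl -[N in _ *+ N]card_ord -sumr_const.
  apply: ler_sum => i _; rewrite -[X in X <= _]ger0_norm ?sqr_ge0 // normrX.
  by rewrite lerXn2r ?nnegrE ?normr_ge0 ?coord_le_mx.
by rewrite -[`|x|]ger0_norm // -sqrtr_sqr -sqrtrM ?ler0n // /norm2 ler_sqrt // mulr_ge0 ?sqr_ge0.
Qed.

Lemma cvg_norm2P {T : Type} (F : set_system T) {FF : Filter F} (f : T -> V) (a : V) :
  f @ F --> a <-> forall e, 0 < e -> \forall t \near F, norm2 (f t - a) < e.
Proof.
rewrite cvgrPdist_lt; split => H e e0.
  have := H (e / cN) (divr_gt0 e0 cN_gt0); apply: filterS => t h.
  apply: (le_lt_trans (norm2_le_mx _)).
  by rewrite distrC -ltr_pdivlMl ?cN_gt0 // mulrC.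
by have := H e e0; apply: filterS => t h; rewrite distrC (le_lt_trans (mx_le_norm2 _)).
Qed.
Lemma norm2D x y : norm2 (x + y) <= norm2 x + norm2 y.
Proof.
rewrite -ler_sqr ?nnegrE ?addr_ge0 ?norm2_ge0 // sq_expand.
have := CS x y; have := norm2_ge0 x; have := norm2_ge0 y; nra.
Qed.

Lemma norm2_lip x y : `|norm2 x - norm2 y| <= norm2 (x - y).
Proof.
have h1 := norm2D (x - y) y; have h2 := norm2D (y - x) x.
rewrite subrK in h1; rewrite subrK norm2B in h2.
by rewrite ler_norml; apply/andP; split; lra.
Qed.

Lemma norm1_lip x y : `|norm1 x - norm1 y| <= N%:R * norm2 (x - y).
Proof.
rewrite /norm1 -sumrB (le_trans (ler_norm_sum _ _ _)) //.
rewrite -[N in N%:R]card_ord mulr_natl -sumr_const; apply: ler_sum => i _.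
apply: (le_trans (ler_dist_dist _ _)).
by have := coord_le_norm2 (x - y) i; rewrite !mxE.
Qed.

Lemma r_lip (al : R) x y : 0 <= al ->
  `|r_alpha al x - r_alpha al y| <= (N%:R + al) * norm2 (x - y).
Proof.
move=> a0; rewrite /r_alpha.
have -> : norm1 x - al * norm2 x - (norm1 y - al * norm2 y) =
   (norm1 x - norm1 y) - al * (norm2 x - norm2 y) by ring.
apply: (le_trans (ler_normB _ _)); rewrite normrM (ger0_norm a0) mulrDl.
apply: lerD; first exact: norm1_lip.
by apply: ler_wpM2l => //; apply: norm2_lip.
Qed.

Lemma lip_cvg {T : Type} (F : set_system T) {FF : Filter F} (g : V -> R) (K : R)
  (f : T -> V) (z : V) :
  0 <= K -> (forall a b, `|g a - g b| <= K * norm2 (a - b)) ->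
  f @ F --> z -> (g \o f) @ F --> g z.
Proof.
move=> K0 Hg /cvg_norm2P H; apply/cvgrPdist_lt => e e0.
have K1 : 0 < K + 1 by lra.
have := H (e / (K + 1)) (divr_gt0 e0 K1); apply: filterS => t ht /=.
apply: (le_lt_trans (Hg _ _)); rewrite norm2B.
apply: (@le_lt_trans _ _ ((K + 1) * norm2 (f t - z))).
  by rewrite ler_wpM2r ?norm2_ge0 //; lra.
by rewrite -ltr_pdivlMl // mulrC.
Qed.

Lemma lipV_cvg {T : Type} (F : set_system T) {FF : Filter F} (g : V -> V) (K : R)
  (f : T -> V) (z : V) :
  0 <= K -> (forall a b, norm2 (g a - g b) <= K * norm2 (a - b)) ->
  f @ F --> z -> (g \o f) @ F --> g z.
Proof.
move=> K0 Hg /cvg_norm2P H; apply/cvg_norm2P => e e0.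
have K1 : 0 < K + 1 by lra.
have := H (e / (K + 1)) (divr_gt0 e0 K1); apply: filterS => t ht /=.
apply: (le_lt_trans (Hg _ _)).
apply: (@le_lt_trans _ _ ((K + 1) * norm2 (f t - z))).
  by rewrite ler_wpM2r ?norm2_ge0 //; lra.
by rewrite -ltr_pdivlMl // mulrC.
Qed.
Lemma d_grad (f : V -> R) y d : 'd f y d = dotp (grad f y) d.
Proof.
rewrite [in LHS](row_sum_delta d) linear_sum /dotp; apply: eq_bigr => i _.
by rewrite linearZ /= mxE mulrC.
Qed.

Lemma g_derive (f : V -> R) (x d : V) t : differentiable f (x + t *: d) ->
  is_derive t 1 (fun s => f (x + s *: d)) (dotp (grad f (x + t *: d)) d).
Proof.
move=> df.
have E : (fun h : R => h^-1 *: (((fun s => f (x + s *: d)) \o shift t) (h *: 1)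
            - f (x + t *: d))) =
         (fun h : R => h^-1 *: ((f \o shift (x + t *: d)) (h *: d) - f (x + t *: d))).
  apply/funext => h /=; congr (_ *: (f _ - _)).
  by rewrite [h *: 1]mulr1 scalerDl addrCA addrC.
split; first by rewrite /derivable E; exact: diff_derivable.
by rewrite /derive E -/(derive f _ d) deriveE // d_grad.
Qed.

Lemma poly_derive (c0 K s : R) :
  is_derive s 1 (fun s : R => s * c0 + s ^+ 2 * K) (c0 + 2 * s * K).
Proof.
have -> : (fun s : R => s * c0 + s ^+ 2 * K) = (id * cst c0) + (id ^+ 2 * cst K).
  by apply/funext => t.
apply: is_derive_eq.
by rewrite /= !scaler0 !add0r expr1 [c0%:A]mulr1 [(2 * s)%:A]mulr1 [K *: _]/GRing.scale /=; ring.
Qed.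

Lemma descent (f : V -> R) (L : R) (x d : V) :
  (forall y, differentiable f y) -> 0 <= L ->
  (forall y z, norm2 (grad f y - grad f z) <= L * norm2 (y - z)) ->
  f (x + d) <= f x + dotp (grad f x) d + L / 2 * norm2 d ^+ 2.
Proof.
move=> fd L0 Lip.
set c0 := dotp (grad f x) d; set K := L / 2 * norm2 d ^+ 2.
pose h := (fun s => f (x + s *: d)) - (fun s : R => s * c0 + s ^+ 2 * K).
have Hd (s : R) : is_derive s 1 h (dotp (grad f (x + s *: d)) d - (c0 + 2 * s * K)).
  by apply: is_deriveB; [exact: g_derive | exact: poly_derive].
have Hc : {within `[0, 1], continuous h}.
  apply: continuous_subspaceT => s.
  apply: differentiable_continuous; apply/derivable1_diffP.
  exact: (@ex_derive _ _ _ _ _ _ _ (Hd s)).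
have H1 : forall s, s \in `]0, 1[%R -> derivable h s 1.
  by move=> s _; exact: (@ex_derive _ _ _ _ _ _ _ (Hd s)).
have H2 : forall s, s \in `]0, 1[%R -> derive1 h s <= 0.
  move=> s; rewrite in_itv /= => /andP[s0 s1].
  rewrite derive1E derive_val /c0.
  rewrite opprD addrA -dotpBl /K.
  have Hq := CS (grad f (x + s *: d) - grad f x) d.
  have E : x + s *: d - x = s *: d by rewrite addrC addKr.
  have Hm := Lip (x + s *: d) x; rewrite E norm2Z ger0_norm ?(ltW s0) // in Hm.
  have n0 := norm2_ge0 d; have m0 := norm2_ge0 (grad f (x + s *: d) - grad f x).
  move: Hq Hm n0 m0.
  set n := norm2 d; set m := norm2 (_ - _); set q := dotp _ _.
  move=> Hq Hm n0 m0.
  have : m * n <= L * (s * n) * n by rewrite ler_wpM2r.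
  nra.
have i0 : (0:R) \in `[0, 1]%R by rewrite in_itv /= lexx ler01.
have i1 : (1:R) \in `[0, 1]%R by rewrite in_itv /= lexx ler01.
have := @ler0_derive1_le_cc R h 0 1 H1 H2 Hc 1 0 i1 i0 ler01.
move=> H.
have : f (x + 1 *: d) - (1 * c0 + 1 ^+ 2 * K) <= f (x + 0 *: d) - (0 * c0 + 0 ^+ 2 * K) := H.
rewrite !scale0r !addr0 !scale1r !mul0r expr0n /= !mul0r !addr0 !mul1r expr1n !mul1r.
rewrite subr0; lra.
Qed.
Lemma incr_ge (psi : nat -> nat) : (forall n, (psi n < psi n.+1)%N) -> forall n, (n <= psi n)%N.
Proof. by move=> h; elim=> // n ih; apply: leq_ltn_trans ih (h n). Qed.

Lemma incr_mono (psi : nat -> nat) : (forall n, (psi n < psi n.+1)%N) ->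
  forall m n, (m <= n)%N -> (psi m <= psi n)%N.
Proof.
move=> h m n; elim: n => [|n ih]; first by rewrite leqn0 => /eqP ->.
rewrite leq_eqVlt => /orP [/eqP -> // | ]; rewrite ltnS => /ih H.
exact: leq_trans H (ltnW (h n)).
Qed.

Lemma psi_oo (psi : nat -> nat) : (forall n, (psi n < psi n.+1)%N) -> psi @ \oo --> \oo.
Proof.
move=> h P [M _ hM]; exists M => // n /= hn; apply: hM.
exact: leq_trans hn (incr_ge _ h n).
Qed.
Lemma subseq_cvgn (f : nat -> R) (psi : nat -> nat) :
  (forall n, (psi n < psi n.+1)%N) -> cvgn f -> cvgn (f \o psi).
Proof.
move=> h /cvg_ex [a ha]; apply/cvg_ex; exists a.
exact: cvg_comp (psi_oo _ h) ha.
Qed.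

Lemma bw_rV (u : nat -> V) (B : R) : (forall n, norm2 (u n) <= B) ->
  exists (phi : nat -> nat) (z : V),
    (forall n, (phi n < phi n.+1)%N) /\ (u \o phi) @ \oo --> z.
Proof.
move=> hB.
have key : forall m, exists phi : nat -> nat, (forall n, (phi n < phi n.+1)%N) /\
    forall i : 'I_N, (i < m)%N -> cvgn (fun n => u (phi n) ord0 i).
  elim=> [|m [phi [hphi hc]]]; first by exists id; split => // i.
  have [mN|mN] := ltnP m N; last first.
    exists phi; split => // i im; apply: hc.
    exact: leq_trans (ltn_ord i) mN.
  pose i0 : 'I_N := Ordinal mN.
  have bnd : bounded_fun (fun n => u (phi n) ord0 i0).
    exists B; split; first exact: num_real.
    move=> M hM n _ /=; apply: le_trans (coord_le_norm2 _ _) _.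
    exact: le_trans (hB _) (ltW hM).
  have [psi /increasing_seqP hpsi cv] := bolzano_weierstrass bnd.
  exists (phi \o psi); split.
    move=> n /=; apply: leq_trans (hphi (psi n)) _.
    exact: incr_mono _ hphi _ _ (hpsi n).
  move=> i; rewrite ltnS leq_eqVlt => /orP [/eqP ei|im].
    have -> : i = i0 by apply: val_inj.
    exact: cv.
  have := subseq_cvgn (fun n => u (phi n) ord0 i) psi hpsi (hc i im); exact.
have [phi [hphi hc]] := key N.
exists phi, (\row_i lim ((fun n => u (phi n) ord0 i) @ \oo)); split => //.
apply/cvgrPdist_lt => e e0.
have : \forall n \near \oo, forall i : 'I_N,
    `|lim ((fun n => u (phi n) ord0 i) @ \oo) - u (phi n) ord0 i| < e.
  apply: filter_forall => i.
  exact: ((@cvgrPdist_lt _ _ _ _ _ _ _).1 (hc i (ltn_ord i)) e e0).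
apply: filterS => n hn.
rewrite [X in X < _]/Num.norm /=.
set M := (X in mx_norm X).
have [->|/mx_norm_neq0 [[i j] ->]] := eqVneq (mx_norm M) 0; first exact: e0.
by rewrite (ord1 i) !mxE.
Qed.
Lemma near_norm2 (a : V) e : 0 < e -> \forall y \near a, norm2 (y - a) < e.
Proof. by move=> e0; have := (cvg_norm2P (nbhs a) id a).1 cvg_id e e0; apply; exact: _. Qed.

Lemma prox_frechet (r : V -> R) (lam : R) (w x1 : V) : 0 < lam ->
  (forall y, r x1 + (2 * lam)^-1 * norm2 (x1 - w) ^+ 2
             <= r y + (2 * lam)^-1 * norm2 (y - w) ^+ 2) ->
  frechet_subdiff r x1 (lam^-1 *: (w - x1)).
Proof.
move=> l0 H eps e0.
have l2 : 0 < 2 * lam by rewrite mulr_gt0.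
have := near_norm2 x1 _ (mulr_gt0 l2 e0); apply: filterS => y hy.
have := H y.
have -> : y - w = (y - x1) + (x1 - w) by rewrite addrA subrK.
rewrite (sq_expand (y - x1) (x1 - w)) dotpZl.
have -> : dotp (w - x1) (y - x1) = - dotp (y - x1) (x1 - w).
  by rewrite dotpC -[w - x1]opprB dotpNr.
set n := norm2 (y - x1); set q := dotp (y - x1) (x1 - w); set m := norm2 (x1 - w).
have n0 : 0 <= n := norm2_ge0 _.
have e1 : (2 * lam)^-1 * (n ^+ 2 + 2 * q + m ^+ 2) =
   (2 * lam)^-1 * n ^+ 2 + lam^-1 * q + (2 * lam)^-1 * m ^+ 2.
  by field; rewrite gt_eqF.
have e2 : (2 * lam)^-1 * n ^+ 2 <= eps * n.
  have h3 : n / (2 * lam) <= eps by rewrite ler_pdivrMr // mulrC ltW.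
  have -> : (2 * lam)^-1 * n ^+ 2 = n * (n / (2 * lam)) by rewrite expr2; ring.
  by rewrite [eps * n]mulrC ler_wpM2l.
rewrite e1 mulrN => h.
lra.
Qed.
Lemma main (alpha L lambda : R)
  (l : 'rV[R]_N -> R) (x0 : 'rV[R]_N) (x : nat -> 'rV[R]_N) :
  0 <= alpha ->
  0 < L ->
  (forall y : 'rV[R]_N, differentiable l y) ->
  (forall y z : 'rV[R]_N, norm2 (grad l y - grad l z) <= L * norm2 (y - z)) ->
  (forall M : R, exists rho : R, forall y : 'rV[R]_N,
      rho <= norm2 y -> M <= r_alpha alpha y + l y) ->
  0 < lambda -> lambda < L^-1 ->
  x 0%N = x0 ->
  (forall k : nat, forall y : 'rV[R]_N,
      r_alpha alpha (x k.+1)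
        + (2 * lambda)^-1 * norm2 (x k.+1 - (x k - lambda *: grad l (x k))) ^+ 2
      <= r_alpha alpha y
        + (2 * lambda)^-1 * norm2 (y - (x k - lambda *: grad l (x k))) ^+ 2) ->
  (forall k : nat,
      r_alpha alpha (x k.+1) + l (x k.+1) <= r_alpha alpha (x k) + l (x k))
  /\ (exists (phi : nat -> nat) (xs : 'rV[R]_N),
        (forall n, (phi n < phi n.+1)%N) /\
        (x \o phi) @ \oo --> xs /\ stationary alpha l xs)
  /\ (forall (phi : nat -> nat) (z : 'rV[R]_N),
        (forall n, (phi n < phi n.+1)%N) ->
        (x \o phi) @ \oo --> z -> stationary alpha l z).
Proof.
move=> a0 L0 ld Lip coer lam0 lamL hx0 prox.
have lamn0 : lambda != 0 by rewrite gt_eqF.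
have lL : lambda * L < 1.
  by move: lamL; rewrite -[L^-1]mul1r ltr_pdivlMr.
set c := (2 * lambda)^-1 - L / 2.
have c0 : 0 < c.
  have -> : c = (1 - lambda * L) / (2 * lambda) by rewrite /c; field.
  by rewrite divr_gt0 ?subr_gt0 ?mulr_gt0.
have step k : r_alpha alpha (x k.+1) + l (x k.+1) <=
    r_alpha alpha (x k) + l (x k) - c * norm2 (x k.+1 - x k) ^+ 2.
  have P := prox k (x k).
  pose g := grad l (x k); set d := x k.+1 - x k.
  have e1 : x k.+1 - (x k - lambda *: g) = d + lambda *: g.
    by rewrite opprB addrCA addrC.
  have e2 : x k - (x k - lambda *: g) = lambda *: g.
    by rewrite opprB addrCA subrr addr0.
  rewrite e1 e2 sq_expand !norm2Z dotpZr (ger0_norm (ltW lam0)) in P.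
  have D := descent l L (x k) d ld (ltW L0) Lip.
  have xd : x k + d = x k.+1 by rewrite /d addrC subrK.
  rewrite xd dotpC -/g in D.
  have e3 : (2 * lambda)^-1 * (2 * (lambda * dotp d g)) = dotp d g by field.
  rewrite !mulrDr e3 in P.
  rewrite /c mulrBl; lra.
have dec k : r_alpha alpha (x k.+1) + l (x k.+1) <= r_alpha alpha (x k) + l (x k).
  have := step k; have := mulr_ge0 (ltW c0) (sqr_ge0 (norm2 (x k.+1 - x k))); lra.
have mono m n : (m <= n)%N ->
    r_alpha alpha (x n) + l (x n) <= r_alpha alpha (x m) + l (x m).
  elim: n => [|n ih]; first by rewrite leqn0 => /eqP ->.
  rewrite leq_eqVlt => /orP [/eqP -> // | ]; rewrite ltnS => /ih H.
  exact: le_trans (dec n) H.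
have [rho hrho] := coer (r_alpha alpha x0 + l x0 + 1).
have bnd k : norm2 (x k) <= rho.
  case: (ltrP (norm2 (x k)) rho) => [/ltW //|h].
  have := hrho _ h; have := mono 0%N k isT; rewrite hx0; lra.
have stat : forall (phi : nat -> nat) (z : 'rV[R]_N),
    (forall n, (phi n < phi n.+1)%N) ->
    (x \o phi) @ \oo --> z -> stationary alpha l z.
  move=> phi z hphi hz.
  have hE : (fun n => r_alpha alpha (x (phi n)) + l (x (phi n))) @ \oo -->
            r_alpha alpha z + l z.
    apply: cvgD.
      exact: (@lip_cvg _ \oo _ (r_alpha alpha) (N%:R + alpha) (x \o phi) z
               (addr_ge0 (ler0n _ _) a0) (fun a b => r_lip alpha a b a0) hz).
    exact: (cvg_comp (x \o phi) l hz (differentiable_continuous (ld z))).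
  have hE1 : (fun n => r_alpha alpha (x (phi n.+1)) + l (x (phi n.+1))) @ \oo -->
            r_alpha alpha z + l z.
    exact: (cvg_comp _ _ (psi_oo succn (fun n => ltnSn n.+1)) hE).
  have gap : forall e, 0 < e -> \forall n \near \oo,
      norm2 (x (phi n).+1 - x (phi n)) < e.
    move=> e e0.
    have ht : (fun n => (r_alpha alpha (x (phi n)) + l (x (phi n))) -
                 (r_alpha alpha (x (phi n.+1)) + l (x (phi n.+1)))) @ \oo --> 0.
      by rewrite -(subrr (r_alpha alpha z + l z)); apply: cvgB.
    move/cvgrPdist_lt: ht => /(_ (c * e ^+ 2) (mulr_gt0 c0 (exprn_gt0 2 e0))).
    apply: filterS => n /=; rewrite sub0r normrN => hn.
    have h1 := step (phi n); have h2 := mono _ _ (hphi n).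
    have := ler_norm (r_alpha alpha (x (phi n)) + l (x (phi n)) -
              (r_alpha alpha (x (phi n.+1)) + l (x (phi n.+1)))).
    move: hn h1 h2; set a := norm2 _ => hn h1 h2 h3.
    have : c * a ^+ 2 < c * e ^+ 2 by lra.
    rewrite ltr_pM2l // => h4.
    have a0' : 0 <= a := norm2_ge0 _.
    nra.
  have hxs : (fun n => x (phi n).+1) @ \oo --> z.
    apply/cvg_norm2P => e e0.
    have e2 : 0 < e / 2 by rewrite divr_gt0.
    move/cvg_norm2P: (hz) => /(_ (e / 2) e2) h1.
    have h2 := gap (e / 2) e2.
    apply: filterS2 h1 h2 => n /= h1 h2.
    have := norm2D (x (phi n).+1 - x (phi n)) (x (phi n) - z).
    rewrite addrA subrK; lra.
  pose vs n := lambda^-1 *: ((x (phi n) - lambda *: grad l (x (phi n))) - x (phi n).+1).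
  have hvs : vs @ \oo --> - grad l z.
    apply/cvg_norm2P => e e0.
    have e2 : 0 < e / 2 by rewrite divr_gt0.
    move/cvg_norm2P: (hz) => /(_ (e / 2 / L) (divr_gt0 e2 L0)) h1.
    have h2 := gap (lambda * (e / 2)) (mulr_gt0 lam0 e2).
    apply: filterS2 h1 h2 => n /= h1 h2.
    have -> : vs n - - grad l z = lambda^-1 *: (x (phi n) - x (phi n).+1)
                 - (grad l (x (phi n)) - grad l z).
      rewrite /vs opprK addrAC scalerBr scalerA mulVf // scale1r.
      by rewrite [in RHS]opprB [in RHS]addrA addrAC.
    apply: le_lt_trans (norm2D _ _) _.
    rewrite norm2N norm2Z ger0_norm ?invr_ge0 ?(ltW lam0) // norm2B.
    have h3 := Lip (x (phi n)) z.
    have h4 : lambda^-1 * norm2 (x (phi n).+1 - x (phi n)) < e / 2.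
      by rewrite mulrC ltr_pdivrMr // mulrC.
    have h5 : L * norm2 (x (phi n) - z) < e / 2.
      by rewrite mulrC -ltr_pdivlMr.
    lra.
  exists (- grad l z); split; last by rewrite addNr.
  rewrite inE; exists (fun n => x (phi n).+1), vs; split => //.
  - exact: (@lip_cvg _ \oo _ (r_alpha alpha) (N%:R + alpha) _ z
               (addr_ge0 (ler0n _ _) a0) (fun a b => r_lip alpha a b a0) hxs).
  - move=> k; rewrite inE; apply: prox_frechet; [exact: lam0 | exact: prox].
split => //; split => //.
have [phi [z [hphi hz]]] := bw_rV x rho bnd.
by exists phi, z; split => //; split => //; exact: stat.
Qed.
End Basic.

Theorem theorem1 (R : realType) (N : nat) (alpha L lambda : R)
  (l : 'rV[R]_N -> R) (x0 : 'rV[R]_N) (x : nat -> 'rV[R]_N) :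
  0 <= alpha ->
  0 < L ->
  (forall y : 'rV[R]_N, differentiable l y) ->
  (forall y z : 'rV[R]_N, norm2 (grad l y - grad l z) <= L * norm2 (y - z)) ->
  (* coercivity of E = r_alpha + l *)
  (forall M : R, exists rho : R, forall y : 'rV[R]_N,
      rho <= norm2 y -> M <= r_alpha alpha y + l y) ->
  0 < lambda -> lambda < L^-1 ->
  x 0%N = x0 ->
  (* forward-backward splitting: x (k+1) is a minimizer of the prox objective *)
  (forall k : nat, forall y : 'rV[R]_N,
      r_alpha alpha (x k.+1)
        + (2 * lambda)^-1 * norm2 (x k.+1 - (x k - lambda *: grad l (x k))) ^+ 2
      <= r_alpha alpha y
        + (2 * lambda)^-1 * norm2 (y - (x k - lambda *: grad l (x k))) ^+ 2) ->
  (forall k : nat,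
      r_alpha alpha (x k.+1) + l (x k.+1) <= r_alpha alpha (x k) + l (x k))
  /\ (exists (phi : nat -> nat) (xs : 'rV[R]_N),
        (forall n, (phi n < phi n.+1)%N) /\
        (x \o phi) @ \oo --> xs /\ stationary alpha l xs)
  /\ (forall (phi : nat -> nat) (z : 'rV[R]_N),
        (forall n, (phi n < phi n.+1)%N) ->
        (x \o phi) @ \oo --> z -> stationary alpha l z).
Proof. exact: main. Qed.
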